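(* Let $p\in\mathbb{N}$. For a dense open set of $a\in\mathbb{R}_+^p$, the spectrum $\sigma(J_a)$ has $p-1$ open gaps.
   Context: $\mathbb{R}_+=(0,\infty)$; $a\in\mathbb{R}_+^p$ is identified with the $p$-periodic positive sequence $(a_n)_{n\in\mathbb{Z}}$, and $J_a$ is the operator on $\ell^2(\mathbb{Z})$ given by $[J_a u]_n = a_{n-1}u_{n-1}+a_nu_{n+1}$. For a $p$-periodic Jacobi matrix $J_{a,b}$ ($[Ju]_n=a_{n-1}u_{n-1}+b_nu_n+a_nu_{n+1}$), define $T_z(n)=\frac{1}{a_n}\begin{pmatrix} z-b_n & -1\\ a_n^2 & 0\end{pmatrix}$, the monodromy $\Phi(z)=T_z(p)T_z(p-1)\cdots T_z(1)$ and discriminant $D(z)=\mathrm{Tr}\,\Phi(z)$. Then $\sigma(J)=\{E\in\mathbb{R}: D(E)\in[-2,2]\}$, and $\{E: D(E)\in(-2,2)\}$ has exactly $p$ connected components; the bands are their closures, numbered left to right $B_1,\dots,B_p$. The $j$-th gap ($1\le j\le p-1$) is open if the right endpoint of $B_j$ is strictly less than the left endpoint of $B_{j+1}$ (the gap then being the open interval between them), and closed if these endpoints coincide. *)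

(* Defs.v *)
From HB Require Import structures.
From mathcomp Require Import all_boot all_order all_algebra.
From mathcomp Require Import all_classical all_reals all_analysis.
Set Implicit Arguments. Unset Strict Implicit. Unset Printing Implicit Defensive.
Import Order.TTheory GRing.Theory Num.Theory.
Import numFieldNormedType.Exports.
Local Open Scope ring_scope.
Local Open Scope classical_set_scope.

Section Jacobi.
Variables (R : realType) (p : nat).

(* a vector v in R^p (a row vector) seen as the p-periodic sequence n |-> v_(n mod p) *)
Definition perseq (v : 'rV[R]_p) (n : nat) : R :=
  match @insub nat (fun k => (k < p)%N) 'I_p (n %% p)%N with
  | Some i => v 0 i
  | None => 0
  end.

Definition transfer (a b : 'rV[R]_p) (z : R) (n : nat) : 'M[R]_2 :=
  (perseq a n)^-1 *:
  \matrix_(i < 2, j < 2)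
     (if (i == 0 :> nat)
      then (if (j == 0 :> nat) then z - perseq b n else -1)
      else (if (j == 0 :> nat) then perseq a n ^+ 2 else 0)).

Fixpoint monodromy_upto (a b : 'rV[R]_p) (z : R) (n : nat) : 'M[R]_2 :=
  match n with
  | 0 => 1%:M
  | k.+1 => transfer a b z k.+1 *m monodromy_upto a b z k
  end.

Definition monodromy a b z := monodromy_upto a b z p.

Definition discriminant a b (z : R) : R := \tr (monodromy a b z).

(* The open set {E : D(E) in (-2,2)}, whose closure is the spectrum. *)
Definition interior_spec a b : set R :=
  [set E | -2 < discriminant a b E < 2].

(* All p-1 gaps of sigma(J_{a,b}) are open: the connected components of
   {E : D(E) in (-2,2)} are p open intervals (l_j, r_j), j = 0..p-1, listed
   left to right, and the right endpoint of each band [l_j, r_j] is strictly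
   less than the left endpoint of the next band. *)
Definition all_gaps_open a b : Prop :=
  exists l r : nat -> R,
    [/\ forall j, (j < p)%N -> l j < r j,
        forall j, (j.+1 < p)%N -> r j < l j.+1
      & forall E, interior_spec a b E <->
                  exists2 j, (j < p)%N & l j < E < r j].

Definition zero_b : 'rV[R]_p := 0.

Definition pos_orthant : set 'rV[R]_p := [set a | forall i, 0 < a 0 i].

End Jacobi.

(* Main.v *)
Require Import Defs.
From HB Require Import structures.
From mathcomp Require Import all_boot all_order all_algebra.
From mathcomp Require Import all_classical all_reals all_analysis.
From mathcomp Require Import polyrcf.
From mathcomp Require Import ring lra zify.
Set Implicit Arguments. Unset Strict Implicit. Unset Printing Implicit Defensive.
Import Order.TTheory GRing.Theory Num.Theory.
Import numFieldNormedType.Exports.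
Local Open Scope ring_scope.
Local Open Scope classical_set_scope.



Section Poly.
Variable R : realType.

Fixpoint PM (c : nat -> R) (k : nat) : {poly R} * {poly R} * {poly R} * {poly R} :=
  match k with
  | 0 => (1, 0, 0, 1)
  | k'.+1 => let t := PM c k' in
     ((c k'.+1)^-1 *: (t.1.1.1 * 'X - t.1.2), (c k'.+1)^-1 *: (t.1.1.2 * 'X - t.2),
      c k'.+1 *: t.1.1.1, c k'.+1 *: t.1.1.2)
  end.

Definition X00 c k := (PM c k).1.1.1.
Definition X01 c k := (PM c k).1.1.2.
Definition X10 c k := (PM c k).1.2.
Definition X11 c k := (PM c k).2.

Lemma X00S c k : X00 c k.+1 = (c k.+1)^-1 *: (X00 c k * 'X - X10 c k). Proof. by []. Qed.
Lemma X01S c k : X01 c k.+1 = (c k.+1)^-1 *: (X01 c k * 'X - X11 c k). Proof. by []. Qed.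
Lemma X10S c k : X10 c k.+1 = c k.+1 *: X00 c k. Proof. by []. Qed.
Lemma X11S c k : X11 c k.+1 = c k.+1 *: X01 c k. Proof. by []. Qed.

Lemma PM_size c k : (forall i, 0 < c i) ->
  [/\ size (X00 c k) = k.+1, 0 < lead_coef (X00 c k), (size (X01 c k) <= k)%N,
      (size (X10 c k) <= k)%N & (size (X11 c k) <= k.+1)%N].
Proof.
move=> cpos; elim: k => [|k [s00 l00 s01 s10 s11]].
  rewrite /X00 /X01 /X10 /X11 /=; split; rewrite ?size_polyC ?oner_eq0 ?lead_coefC ?ltr01 ?eqxx //.
have cn0 : c k.+1 != 0 by rewrite gt_eqF.
have ci0 : (c k.+1)^-1 != 0 by rewrite invr_eq0.
have X00n0 : X00 c k != 0 by rewrite -size_poly_eq0 s00.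
have sM : size (X00 c k * 'X) = k.+2 by rewrite size_mulX // s00.
have sN : (size (- X10 c k)%R < size (X00 c k * 'X)%R)%N.
  by rewrite size_polyN sM; apply: (leq_ltn_trans s10).
split.
- by rewrite X00S size_scale // size_polyDl.
- by rewrite X00S lead_coefZ lead_coefDl // lead_coefMX mulr_gt0 // invr_gt0.
- rewrite X01S; apply: leq_trans (size_scale_leq _ _) _; apply: leq_trans (size_polyD _ _) _.
  rewrite geq_max size_polyN s11 andbT; apply: leq_trans (size_polyMleq _ _) _.
  by rewrite size_polyX addn2 /=.
- by rewrite X10S; apply: leq_trans (size_scale_leq _ _) _; rewrite s00.
- rewrite X11S; apply: leq_trans (size_scale_leq _ _) _; apply: leq_trans s01 _; by rewrite -addn2 leq_addr.
Qed.

Lemma PM_det c k : (forall i, 0 < c i) -> forall z : R,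
  (X00 c k).[z] * (X11 c k).[z] - (X01 c k).[z] * (X10 c k).[z] = 1.
Proof.
move=> cpos z; elim: k => [|k IH].
  by rewrite /X00 /X01 /X10 /X11 /= !hornerE; lra.
have cn0 : c k.+1 != 0 by rewrite gt_eqF.
rewrite X00S X01S X10S X11S !(hornerZ, hornerD, hornerN, hornerMX) -IH.

by field.
Qed.


Section Link.
Variable p : nat.

Lemma perseq0 n : perseq (zero_b R p) n = 0.
Proof. by rewrite /perseq /zero_b; case: insub => // i; rewrite mxE. Qed.

Lemma perseq_pos (a : 'rV[R]_p) n : (0 < p)%N -> pos_orthant a -> 0 < perseq a n.
Proof.
move=> hp ha; rewrite /perseq insubT ?ltn_pmod // => Hn; exact: ha.
Qed.

Definition entm c k (i j : 'I_2) : {poly R} :=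
  if i == 0 :> nat then (if j == 0 :> nat then X00 c k else X01 c k)
  else (if j == 0 :> nat then X10 c k else X11 c k).

Lemma monoE (a : 'rV[R]_p) z k : (forall n, 0 < perseq a n) ->
  monodromy_upto a (zero_b R p) z k = \matrix_(i, j) (entm (perseq a) k i j).[z].
Proof.
move=> apos; elim: k => [|k IH].
  apply/matrixP => i j; rewrite !mxE /entm /X00 /X01 /X10 /X11 /=.
  by case: i => [[|[|i]] Hi]; case: j => [[|[|j]] Hj] //=; rewrite hornerE.
have cn0 : perseq a k.+1 != 0 by rewrite gt_eqF.
rewrite /= IH; apply/matrixP => i j; rewrite !mxE !big_ord_recl big_ord0 addr0 !mxE /= perseq0 subr0.
rewrite /entm X00S X01S X10S X11S.
case: i => [[|[|i]] Hi]; case: j => [[|[|j]] Hj] //=;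
  rewrite !(hornerZ, hornerD, hornerN, hornerMX); by field.
Qed.

Lemma discE (a : 'rV[R]_p) z : (forall n, 0 < perseq a n) ->
  discriminant a (zero_b R p) z = (X00 (perseq a) p + X11 (perseq a) p).[z].
Proof.
move=> apos; rewrite /discriminant /monodromy monoE // /mxtrace !big_ord_recl big_ord0 addr0 !mxE /entm /=.
by rewrite hornerD.
Qed.

End Link.
End Poly.



Section Real.
Variable R : realType.
Implicit Types (q : {poly R}) (u v x : R).

Lemma noroot_pos q u v : u <= v -> (forall x, u <= x <= v -> ~~ root q x) ->
  0 < q.[u] * q.[v].
Proof.
move=> uv H; rewrite ltNge; apply/negP => /(polyrcf.poly_ivt uv) [x].
by rewrite in_itv /= => /H /negP.
Qed.

Lemma noroot_itv q al be u v : al < u < be -> al < v < be ->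
  (forall x, al < x < be -> ~~ root q x) -> 0 < q.[u] * q.[v].
Proof.
move=> /andP[au ub] /andP[av vb] H.
have [uv|vu] := leP u v.
  apply: noroot_pos => // x /andP[ux xv]; apply: H.
  by rewrite (lt_le_trans au ux) (le_lt_trans xv vb).
rewrite mulrC; apply: noroot_pos; first exact: ltW.
move=> x /andP[vx xu]; apply: H.
by rewrite (lt_le_trans av vx) (le_lt_trans xu ub).
Qed.

Lemma sign_trans (x y e : R) : 0 < x * y -> 0 < e * x -> 0 < e * y.
Proof.
move=> hxy hex.
have hx : x != 0 by apply: contraTneq hxy => ->; rewrite mul0r ltxx.
have : 0 < (e * x) * (x * y) by rewrite mulr_gt0.
have -> : e * x * (x * y) = (e * y) * (x * x) by ring.
by rewrite pmulr_lgt0 // -expr2 exprn_even_gt0.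
Qed.

Lemma mono_lt (f : nat -> R) N : (forall i, (i.+1 < N)%N -> f i < f i.+1) ->
  forall i j, (i < j)%N -> (j < N)%N -> f i < f j.
Proof.
move=> H i j; elim: j => // j IH; rewrite ltnS leq_eqVlt => /orP[/eqP <- | ij] jN.
  exact: H.
apply: lt_trans (IH ij (ltnW jN)) (H _ jN).
Qed.

Lemma mono_le (f : nat -> R) N : (forall i, (i.+1 < N)%N -> f i < f i.+1) ->
  forall i j, (i <= j)%N -> (j < N)%N -> f i <= f j.
Proof.
move=> H i j; rewrite leq_eqVlt => /orP[/eqP -> //| ij] jN.
exact/ltW/(mono_lt H).
Qed.

Lemma roots_exhaust q N (s : nat -> R) : q != 0 -> (size q <= N.+1)%N ->
  (forall i, (i.+1 < N)%N -> s i < s i.+1) ->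
  (forall i, (i < N)%N -> root q (s i)) ->
  forall x, root q x -> exists2 i, (i < N)%N & x = s i.
Proof.
move=> qn0 sq mono rts x rx.
case: (pselect (exists2 i, (i < N)%N & x = s i)) => // hne; exfalso.
have hne' : forall i, (i < N)%N -> x != s i.
  by move=> i iN; apply/eqP => e; apply: hne; exists i.
have Hall : all (root q) (x :: map s (iota 0 N)).
  rewrite /= rx /=; apply/allP => y /mapP [i]; rewrite mem_iota add0n => /andP[_ iN] ->.
  exact: rts.
have Hu : uniq (x :: map s (iota 0 N)).
  rewrite cons_uniq; apply/andP; split.
    apply/mapP => -[i]; rewrite mem_iota add0n => /andP[_ iN] e.
    by move: (hne' i iN); rewrite e eqxx.
  rewrite map_inj_in_uniq ?iota_uniq // => i j; rewrite !mem_iota !add0n.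
  move=> /andP[_ iN] /andP[_ jN] e; apply/eqP; rewrite eqn_leq.
  apply/andP; split; rewrite leqNgt; apply/negP => h.
    by move: (mono_lt mono h iN); rewrite e ltxx.
  by move: (mono_lt mono h jN); rewrite e ltxx.
have := max_poly_roots qn0 Hall Hu.
by rewrite /= size_map size_iota ltnNge sq.
Qed.

Lemma far_right q B M : 0 < lead_coef q -> (1 < size q)%N ->
  exists z, B <= z /\ M <= q.[z].
Proof.
move=> lq sq; have [n Hn] := poly_lim_infty M lq sq.
exists (Num.max n B); split; first by rewrite le_max lexx orbT.
by apply: Hn; rewrite le_max lexx.
Qed.

Lemma far_left q B M : 0 < lead_coef q -> (1 < size q)%N ->
  exists z, z <= B /\ M <= (-1) ^+ (size q).-1 * q.[z].
Proof.
move=> lq sq.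
pose q' := ((-1) ^+ (size q).-1) *: (q \Po (- 'X)).
have sX : size (- 'X : {poly R}) = 2 by rewrite size_polyN size_polyX.
have sq' : size q' = size q by rewrite size_scale ?signr_eq0 // size_comp_poly2.
have lq' : 0 < lead_coef q'.
  rewrite lead_coefZ lead_coef_comp ?sX // lead_coefN lead_coefX mulrCA.
  by rewrite -exprD -signr_odd oddD addbb expr0 mulr1.
have := far_right (- B) M lq'; rewrite sq' => /(_ sq) [z [Hz HM]].
exists (- z); split; first by rewrite lerNl.
by move: HM; rewrite /q' hornerZ horner_comp hornerN hornerX.
Qed.

Lemma sign_pred m i : (i < m)%N -> (-1) ^+ (m - i) = - (-1) ^+ (m.-1 - i) :> R.
Proof.
case: m => // m; rewrite ltnS /= => im.
by rewrite subSn // exprS mulN1r.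
Qed.

End Real.



Section Interlace.
Variable R : realType.

Lemma sign_sq k : (-1) ^+ k * (-1) ^+ k = 1 :> R.
Proof. by rewrite -exprD -signr_odd oddD addbb expr0. Qed.

Lemma opp_sign k (x y : R) : 0 < - (-1) ^+ k * x -> 0 < (-1) ^+ k * y -> x * y < 0.
Proof.
move=> h1 h2; have := mulr_gt0 h1 h2.
have -> : - (-1) ^+ k * x * ((-1) ^+ k * y) = - (x * y) * ((-1) ^+ k * (-1) ^+ k) by ring.
by rewrite sign_sq mulr1 oppr_gt0.
Qed.

Definition Claim (c : nat -> R) m := exists s w : nat -> R,
 [/\ forall i, (i < m)%N -> w i < s i /\ s i < w i.+1,
     forall i, (i < m)%N -> root (X00 c m) (s i) /\ 0 < (-1) ^+ (m.-1 - i) * (X10 c m).[s i]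
   & forall i, (i <= m)%N -> 0 < (-1) ^+ (m - i) * (X00 c m).[w i]].

Lemma interlace (c : nat -> R) : (forall i, 0 < c i) -> forall m, Claim c m.
Proof.
move=> cpos; elim => [|m [s [w [Hsw Hs Hw]]]].
  exists (fun _ => 0), (fun _ => 0); split => // i; rewrite leqn0 => /eqP ->.
  by rewrite /X00 /= hornerC expr0 mul1r ltr01.
set q := X00 c m.+1.
have cpos' := cpos m.+1.
have [sq lq _ _ _] := PM_size m.+1 cpos.
have [sx0 _ _ _ _] := PM_size m cpos.
have Hqs : forall i, (i < m)%N -> 0 < (-1) ^+ (m - i) * q.[s i].
  move=> i im; have [r1 pos] := Hs i im.
  rewrite /q X00S hornerZ hornerD hornerN hornerMX (rootP r1) mul0r sub0r sign_pred //.
  have -> : - (-1) ^+ (m.-1 - i) * ((c m.+1)^-1 * - (X10 c m).[s i]) =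
     (c m.+1)^-1 * ((-1) ^+ (m.-1 - i) * (X10 c m).[s i]) by ring.
  by rewrite mulr_gt0 // invr_gt0.
have wmono : forall i, (i.+1 < m.+1)%N -> w i < w i.+1.
  by move=> i; rewrite ltnS => im; have [h1 h2] := Hsw i im; exact: lt_trans h2.
have smono : forall i, (i.+1 < m)%N -> s i < s i.+1.
  move=> i im; have [_ h1] := Hsw i (ltnW im); have [h2 _] := Hsw i.+1 im.
  exact: lt_trans h2.
have w0m : w 0 <= w m by apply: (mono_le wmono).
have sq2 : (1 < size q)%N by rewrite sq.
have [L0 [HL0 HLs]] := far_left (w 0 - 1) 1 lq sq2.
rewrite sq /= in HLs.
have [R0 [HR0 HRs]] := far_right (w m + 1) 1 lq sq2.
pose w' j := if j == 0%N then L0 else if (j <= m)%N then s j.-1 else R0.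
have Hw' : forall j, (j <= m.+1)%N -> 0 < (-1) ^+ (m.+1 - j) * q.[w' j].
  move=> [|j] jm; rewrite /w' /=.
    by rewrite subn0; apply: lt_le_trans HLs; rewrite ltr01.
  case: (leqP j.+1 m) => jm'.
    by rewrite subSS; apply: Hqs.
  have -> : j.+1 = m.+1 by apply/eqP; rewrite eqn_leq jm.
  by rewrite subnn expr0 mul1r; apply: lt_le_trans HRs; rewrite ltr01.
have Hint : forall j, (j <= m)%N -> w' j < w j < w' j.+1.
  move=> j jm; apply/andP; split.
    case: j jm => [|j] jm; rewrite /w' /=.
      by apply: le_lt_trans HL0 _; rewrite ltrBlDr ltrDl ltr01.
    by rewrite jm; have [_ h] := Hsw j jm.
  rewrite /w' /=; case: (leqP j.+1 m) => jm'.
    by have [h _] := Hsw j jm'.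
  have -> : j = m by apply/eqP; rewrite eqn_leq jm.
  by apply: lt_le_trans HR0; rewrite ltrDl ltr01.
have Hroots : forall j, exists x, (j <= m)%N -> w' j < x < w' j.+1 /\ root q x.
  move=> j; case: (leqP j m) => jm; last by exists 0.
  have hprod : q.[w' j] * q.[w' j.+1] < 0.
    apply: (@opp_sign (m - j)).
      have e : (-1) ^+ (m.+1 - j) = - (-1) ^+ (m - j) :> R.
        by rewrite (@sign_pred _ m.+1) ?ltnS.
      by rewrite -e; apply: Hw'; rewrite ltnW.
    by rewrite -subSS; apply: Hw'.
  have hle : w' j <= w' j.+1.
    by have /andP[h1 h2] := Hint j jm; exact/ltW/(lt_trans h1).
  have [x] := polyrcf.poly_ivtoo hle hprod.
  by rewrite in_itv /= => hx rx; exists x.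
case: (choice Hroots) => s' Hs'.
have Hs'w : forall j, (j <= m)%N -> 0 < (-1) ^+ (m - j) * (X00 c m).[s' j].
  move=> j jm; have [/andP[h1 h2] _] := Hs' j jm.
  have /andP[i1 i2] := Hint j jm.
  apply: (sign_trans _ (Hw j jm)).
  apply: (@noroot_itv _ _ (w' j) (w' j.+1)); rewrite ?i1 ?i2 ?h1 ?h2 //.
  move=> x /andP[x1 x2]; apply/negP => rx.
  have X0n0 : X00 c m != 0 by rewrite -size_poly_eq0 sx0.
  have [i im xe] := roots_exhaust X0n0 (eq_leq sx0) smono (fun i im => (Hs i im).1) rx; subst x.
  case: (ltnP i j) => ij.
    have jn0 : (j == 0%N) = false by apply/negbTE; rewrite -lt0n; apply: leq_ltn_trans ij.
    move: x1; rewrite /w' jn0 jm.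
    have jp : (0 < j)%N by rewrite lt0n jn0.
    rewrite ltNge (mono_le smono) //; first by rewrite -ltnS prednK.
    by rewrite (leq_trans _ jm) // prednK.

  move: x2; rewrite /w'; case: (leqP j.+1 m) => jm'; last first.
    by move: jm'; rewrite ltnS leqNgt (leq_ltn_trans ij im).
  by rewrite /= ltNge (mono_le smono).
exists s', w'; split.
- by move=> i im; have [/andP[h1 h2] _] := Hs' i im.
- move=> i im; have [_ r] := Hs' i im; split => //.
  rewrite X10S hornerZ /=.
  have -> : (-1) ^+ (m - i) * (c m.+1 * (X00 c m).[s' i]) =
    c m.+1 * ((-1) ^+ (m - i) * (X00 c m).[s' i]) by ring.
  by rewrite mulr_gt0 // Hs'w.
- exact: Hw'.
Qed.

End Interlace.



Section Good.
Variable R : realType.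

Lemma PM_ext (c c' : nat -> R) k : (forall i, (0 < i <= k)%N -> c i = c' i) ->
  PM c k = PM c' k.
Proof.
elim: k => // k IH H /=; rewrite IH; last first.
  by move=> i /andP[i0 ik]; apply: H; rewrite i0 (leq_trans ik).
by rewrite H //= leqnn.
Qed.

Definition goodP (D : {poly R}) p := exists z x : nat -> R,
  [/\ forall k, (k < p)%N -> z k < x k < z k.+1,
      forall k, (k <= p)%N -> 4 < D.[z k] ^+ 2
    & forall k, (k < p)%N -> D.[x k] ^+ 2 < 4].

Definition Dt (c : nat -> R) n t : {poly R} :=
  t^-1 *: (X00 c n * 'X - X10 c n) + t *: X01 c n.

Lemma Dt_size c n t : (forall i, 0 < c i) -> 0 < t ->
  size (Dt c n t) = n.+2 /\ 0 < lead_coef (Dt c n t).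
Proof.
move=> cpos tpos; have [s00 l00 s01 s10 _] := PM_size n cpos.
have X00n0 : X00 c n != 0 by rewrite -size_poly_eq0 s00.
have sM : size (X00 c n * 'X) = n.+2 by rewrite size_mulX // s00.
have sN : (size (- X10 c n)%R < size (X00 c n * 'X)%R)%N.
  by rewrite size_polyN sM; apply: (leq_ltn_trans s10).
have tn0 : t^-1 != 0 by rewrite invr_eq0 gt_eqF.
have s1 : size (t^-1 *: (X00 c n * 'X - X10 c n)) = n.+2.
  by rewrite size_scale // size_polyDl // sM.
have s2 : (size (t *: X01 c n) < n.+2)%N.
  by apply: leq_ltn_trans (size_scale_leq _ _) _; apply: leq_ltn_trans s01 _.
rewrite /Dt size_polyDl ?s1 // lead_coefDl ?s1 //; split => //.
by rewrite lead_coefZ lead_coefDl // lead_coefMX mulr_gt0 // invr_gt0.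
Qed.

Lemma two_lt (a t : R) : 0 < a -> 0 < t -> a != t -> 2 < a / t + t / a.
Proof.
move=> a0 t0 at'.
have h : 0 < (a - t) ^+ 2 / (a * t).
  apply: divr_gt0; last by rewrite mulr_gt0.
  by rewrite exprn_even_gt0 // subr_eq0.
have -> : a / t + t / a = 2 + (a - t) ^+ 2 / (a * t).
  by field; rewrite ?gt_eqF.
by rewrite ltrDl.
Qed.

Lemma good_Dt (c : nat -> R) n : (forall i, 0 < c i) ->
  exists bad : seq R, forall t, 0 < t -> t \notin bad -> goodP (Dt c n t) n.+1.
Proof.
move=> cpos; have [s [w [Hsw Hs Hw]]] := interlace cpos n.
exists [seq `|(X10 c n).[s i]| | i <- iota 0 n] => t tpos tbad.
set D := Dt c n t.
have [sD lD] := Dt_size n cpos tpos.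
have HDs : forall i, (i < n)%N -> 2 < (-1) ^+ (n - i) * D.[s i].
  move=> i im; have [r1 pos] := Hs i im.
  have det := PM_det n cpos (s i); rewrite (rootP r1) mul0r sub0r in det.
  move: pos det; set e := (-1) ^+ (n.-1 - i) : R; set x := (X10 c n).[s i] => pos det.
  have xn0 : x != 0 by apply: contraTneq pos => ->; rewrite mulr0 ltxx.
  have y01 : (X01 c n).[s i] = - x^-1.
    by apply: (mulIf xn0); rewrite mulNr mulVf // -det opprK.
  have Dsi : D.[s i] = t^-1 * (- x) + t * (- x^-1).
    by rewrite /D /Dt !(hornerD, hornerZ, hornerN, hornerMX) (rootP r1) mul0r sub0r y01.
  have ee : e * e = 1 by rewrite sign_sq.
  have en0 : e != 0 by rewrite signr_eq0.
  set a := e * x.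
  have xa : x = e * a by rewrite /a mulrA ee mul1r.
  have a0 : 0 < a by [].
  have tn0 : t != 0 by rewrite gt_eqF.
  have an0 : a != 0 by rewrite gt_eqF.
  have neq : a != t.
    apply: contraNneq tbad => <-; apply/mapP; exists i; first by rewrite mem_iota add0n.
    by rewrite -/x xa normrM normr_sign mul1r gtr0_norm.
  rewrite sign_pred // -/e Dsi xa.
  have -> : - e * (t^-1 * - (e * a) + t * - (e * a)^-1) = (e * e) * (a / t) + t / a.
    by field; rewrite an0 tn0 en0.
  by rewrite ee mul1r two_lt.
have wmono : forall i, (i.+1 < n.+1)%N -> w i < w i.+1.
  by move=> i; rewrite ltnS => im; have [h1 h2] := Hsw i im; exact: lt_trans h2.
have w0n : w 0 <= w n by apply: (mono_le wmono).
have sD2 : (1 < size D)%N by rewrite sD.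
have [z0 [Hz0 Hz0s]] := far_left (w 0 - 1) 3 lD sD2.
rewrite sD /= in Hz0s.
have [zp [Hzp Hzps]] := far_right (w n + 1) 3 lD sD2.
pose z k := if k == 0%N then z0 else if (k <= n)%N then s k.-1 else zp.
have Hz : forall k, (k <= n.+1)%N -> 2 < (-1) ^+ (n.+1 - k) * D.[z k].
  move=> [|k] km; rewrite /z /=.
    by rewrite subn0; apply: lt_le_trans Hz0s; lra.
  case: (leqP k.+1 n) => km'.
    by rewrite subSS; apply: HDs.
  have -> : k.+1 = n.+1 by apply/eqP; rewrite eqn_leq km.
  by rewrite subnn expr0 mul1r; apply: lt_le_trans Hzps; lra.
have Hint : forall k, (k <= n)%N -> z k < w k < z k.+1.
  move=> k km; apply/andP; split.
    case: k km => [|k] km; rewrite /z /=.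
      by apply: le_lt_trans Hz0 _; rewrite ltrBlDr ltrDl ltr01.
    by rewrite km; have [_ h] := Hsw k km.
  rewrite /z /=; case: (leqP k.+1 n) => km'.
    by have [h _] := Hsw k km'.
  have -> : k = n by apply/eqP; rewrite eqn_leq km.
  by apply: lt_le_trans Hzp; rewrite ltrDl ltr01.
have Hroots : forall k, exists x, (k <= n)%N -> z k < x < z k.+1 /\ root D x.
  move=> k; case: (leqP k n) => km; last by exists 0.
  have hprod : D.[z k] * D.[z k.+1] < 0.
    apply: (@opp_sign _ (n - k)).
      have e : (-1) ^+ (n.+1 - k) = - (-1) ^+ (n - k) :> R.
        by rewrite (@sign_pred _ n.+1) ?ltnS.
      by rewrite -e; apply: lt_trans (Hz k (ltnW _)); rewrite ?ltr0n.
    by rewrite -subSS; apply: lt_trans (Hz k.+1 _); rewrite ?ltr0n.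
  have hle : z k <= z k.+1.
    by have /andP[h1 h2] := Hint k km; exact/ltW/(lt_trans h1).
  have [x] := polyrcf.poly_ivtoo hle hprod.
  by rewrite in_itv /= => hx rx; exists x.
case: (choice Hroots) => x Hx.
exists z, x; split.
- by move=> k km; have [h _] := Hx k km.
- move=> k km; have := Hz k km; set e := (-1) ^+ _ => h.
  have ee : e * e = 1 by rewrite sign_sq.
  have -> : D.[z k] ^+ 2 = (e * D.[z k]) ^+ 2 by rewrite exprMn [e ^+ 2]expr2 ee mul1r.
  by nra.
- move=> k km; have [_ r] := Hx k km; rewrite (rootP r) expr2 mul0r; lra.
Qed.

End Good.



Section Bands.
Variable R : realType.

Lemma locate (rho : nat -> R) N E : (forall i, (i < N)%N -> rho i < rho i.+1) ->
  (forall m, (m <= N)%N -> E != rho m) ->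
  [\/ E < rho 0, rho N < E | exists2 i, (i < N)%N & rho i < E < rho i.+1].
Proof.
elim: N => [|N IH] mono hne.
  by have := hne 0%N (leqnn 0); rewrite neq_lt => /orP[h|h]; [apply: Or31|apply: Or32].
have := IH (fun i iN => mono i (ltnW iN)) (fun m mN => hne m (leqW mN)).
case=> [h|h|[i iN h]]; first by apply: Or31.
  have := hne N.+1 (leqnn _); rewrite neq_lt => /orP[h'|h']; last by apply: Or32.
  by apply: Or33; exists N => //; rewrite h h'.
by apply: Or33; exists i => //; rewrite ltnW.
Qed.

Section Exh.
Variables (Q : {poly R}) (N : nat) (rho : nat -> R).
Hypothesis mono : forall i, (i.+1 < N)%N -> rho i < rho i.+1.
Hypothesis ex : forall y, root Q y -> exists2 m, (m < N)%N & y = rho m.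

Lemma gap_noroot i : (i.+1 < N)%N -> forall y, rho i < y < rho i.+1 -> ~~ root Q y.
Proof.
move=> iN y /andP[h1 h2]; apply/negP => /ex [m mN ym]; subst y.
case: (leqP m i) => mi.
  by move: h1; rewrite ltNge (mono_le mono) //; exact: ltnW.
by move: h2; rewrite ltNge (mono_le mono).
Qed.

Lemma below_noroot y : y < rho 0 -> ~~ root Q y.
Proof.
move=> h; apply/negP => /ex [m mN ym]; subst y.
by move: h; rewrite ltNge (mono_le mono).
Qed.

Lemma above_noroot y : rho N.-1 < y -> ~~ root Q y.
Proof.
move=> h; apply/negP => /ex [m mN ym]; subst y.
have N0 : (0 < N)%N := leq_ltn_trans (leq0n m) mN.
move: h; rewrite ltNge (mono_le mono) //; first by rewrite -ltnS prednK.
by rewrite ltn_predL.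
Qed.

End Exh.

Lemma sq_lt4 (d : R) : (-2 < d < 2) <-> d ^+ 2 - 4 < 0.
Proof.
split.
  by move=> /andP[h1 h2]; rewrite expr2; nra.
by rewrite expr2 => h; apply/andP; split; nra.
Qed.

Lemma par_even (j : nat) : (j.+1 < j.+1)%N = false. Proof. by rewrite ltnn. Qed.

Lemma half_odd j P : (j.+1 < P.*2)%N -> odd j -> (j./2.+1 < P)%N /\ uphalf j = j./2.+1.
Proof.
move=> h o; have := odd_double_half j; rewrite o => e; split; first lia.
by rewrite uphalf_half o.
Qed.

Lemma half_even j P : (j.+1 < P.*2)%N -> odd j = false -> (j./2 < P)%N /\ uphalf j = j./2.
Proof.
move=> h o; have := odd_double_half j; rewrite o => e; split; first lia.
by rewrite uphalf_half o.
Qed.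

Lemma np_contra (a b : R) : a < 0 -> 0 < b -> 0 < a * b -> False.
Proof. by move=> ha hb hab; nra. Qed.

Lemma nn_neg (a b : R) : b < 0 -> 0 < a * b -> a < 0.
Proof. by move=> hb hab; nra. Qed.

Theorem bands (D : {poly R}) p : (0 < p)%N -> (size D <= p.+1)%N -> goodP D p ->
  exists l r : nat -> R,
    [/\ forall j, (j < p)%N -> l j < r j,
        forall j, (j.+1 < p)%N -> r j < l j.+1
      & forall E, (-2 < D.[E] < 2) <->
                  exists2 j, (j < p)%N & l j < E < r j].
Proof.
move=> p0 sD [z [x [Hzx Hz Hx]]].
pose Q := D * D - 4%:P.
have QE : forall y, Q.[y] = D.[y] ^+ 2 - 4 by move=> y; rewrite /Q !hornerE expr2.
have Hroot : forall k, exists lr : R * R, (k < p)%N ->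
    [/\ z k < lr.1 < x k, x k < lr.2 < z k.+1, root Q lr.1 & root Q lr.2].
  move=> k; case: (ltnP k p) => kp; last by exists (0, 0).
  have /andP[h1 h2] := Hzx k kp.
  have hzk : 0 < Q.[z k] by rewrite QE subr_gt0 Hz // ltnW.
  have hzk1 : 0 < Q.[z k.+1] by rewrite QE subr_gt0 Hz.
  have hxk : Q.[x k] < 0 by rewrite QE subr_lt0 Hx.
  have p1 : Q.[z k] * Q.[x k] < 0 by rewrite pmulr_rlt0.
  have p2 : Q.[x k] * Q.[z k.+1] < 0 by rewrite mulrC pmulr_rlt0.
  have [a] := polyrcf.poly_ivtoo (ltW h1) p1; rewrite in_itv /= => ha ra.
  have [b] := polyrcf.poly_ivtoo (ltW h2) p2; rewrite in_itv /= => hb rb.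
  by exists (a, b).
case: (choice Hroot) => lr Hlr.
pose l k := (lr k).1; pose r k := (lr k).2.
pose rho j := if odd j then r j./2 else l j./2.
have lr1 : forall j, (j < p)%N -> l j < r j.
  move=> j jp; have [/andP[h1 h2] /andP[h3 h4] _ _] := Hlr j jp.
  exact: lt_trans h2 h3.
have lr2 : forall j, (j.+1 < p)%N -> r j < l j.+1.
  move=> j jp; have [_ /andP[h3 h4] _ _] := Hlr j (ltnW jp).
  have [/andP[h1 h2] _ _ _] := Hlr j.+1 jp.
  exact: lt_trans h4 h1.
have mono : forall j, (j.+1 < p.*2)%N -> rho j < rho j.+1.
  move=> j jp; rewrite /rho /=; case o: (odd j) => /=.
    by have [h e] := half_odd jp o; rewrite e; apply: lr2.
  by have [h e] := half_even jp o; rewrite e; apply: lr1.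
have rho_l : forall j, rho j.*2 = l j by move=> j; rewrite /rho odd_double doubleK.
have rho_r : forall j, rho j.*2.+1 = r j.
  by move=> j; rewrite /rho /= odd_double /= uphalf_half odd_double doubleK.
have Qn0 : Q != 0.
  apply/negP => /eqP Q0; have := Hz 0%N (leq0n _); move: (QE (z 0%N)).
  by rewrite Q0 horner0 => /eqP; rewrite eq_sym subr_eq0 => /eqP ->; rewrite ltxx.
have sQ : (size Q <= (p.*2).+1)%N.
  apply: leq_trans (size_polyD _ _) _; rewrite geq_max; apply/andP; split.
    apply: leq_trans (size_polyMleq _ _) _; move: sD; lia.
  by rewrite size_polyN size_polyC; case: (_ != _).
have allr : forall j, (j < p.*2)%N -> root Q (rho j).
  move=> j jp; rewrite /rho; case o: (odd j).
    have jp' : (j./2 < p)%N by have := odd_double_half j; rewrite o; lia.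
    by have [_ _ _ h] := Hlr _ jp'.
  have jp' : (j./2 < p)%N by have := odd_double_half j; rewrite o; lia.
  by have [_ _ h _] := Hlr _ jp'.
have ex := roots_exhaust Qn0 sQ mono allr.
exists l, r; split => // E; rewrite sq_lt4 -QE; split.
- move=> hE.
  have hne : forall m, (m <= (p.*2).-1)%N -> E != rho m.
    move=> m mp; apply/eqP => e.
    have mp' : (m < p.*2)%N by move: mp; lia.
    by move: hE; rewrite e (rootP (allr m mp')) ltxx.
  have mono' : forall i, (i < (p.*2).-1)%N -> rho i < rho i.+1.
    by move=> i ip; apply: mono; move: ip; lia.
  have Ez : forall y, 0 < Q.[y] -> 0 < Q.[E] * Q.[y] -> False.
    by move=> y hy hp; apply: (np_contra hE hy hp).
  case: (locate mono' hne) => [h|h|[i ip /andP[h1 h2]]].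
  + have [/andP[h3 h4] _ _ _] := Hlr 0%N p0.
    have hz0 : z 0%N < rho 0%N by have /= -> := rho_l 0%N.
    exfalso; apply: (Ez (z 0%N)); first by rewrite QE subr_gt0 Hz.
    apply: (@noroot_itv _ _ (Num.min E (z 0%N) - 1) (rho 0%N)).
    * have hm : Num.min E (z 0%N) <= E by rewrite ge_min lexx.
      by apply/andP; split => //; lra.
    * have hm : Num.min E (z 0%N) <= z 0%N by rewrite ge_min lexx orbT.
      by apply/andP; split => //; lra.
    * by move=> y /andP[_ hy]; apply: (below_noroot mono ex).
  + have pe : ((p.-1).*2.+1 = (p.*2).-1)%N by move: p0; lia.
    have pp : (p.-1 < p)%N by rewrite ltn_predL.
    have [_ /andP[h3 h4] _ _] := Hlr p.-1 pp.
    rewrite prednK // in h4.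
    have hzp : rho (p.*2).-1 < z p by rewrite -pe rho_r.
    exfalso; apply: (Ez (z p)); first by rewrite QE subr_gt0 Hz.
    apply: (@noroot_itv _ _ (rho (p.*2).-1) (Num.max E (z p) + 1)).
    * have hm : E <= Num.max E (z p) by rewrite le_max lexx.
      by apply/andP; split => //; lra.
    * have hm : z p <= Num.max E (z p) by rewrite le_max lexx orbT.
      by apply/andP; split => //; lra.
    * by move=> y /andP[hy _]; apply: (above_noroot mono ex).
  + have ip' : (i.+1 < p.*2)%N by move: ip; lia.
    case o: (odd i).
    * have [kp e] := half_odd ip' o.
      have ie : i = (i./2).*2.+1 by have := odd_double_half i; rewrite o; lia.
      have [_ /andP[_ h4] _ _] := Hlr i./2 (ltnW kp).
      have [/andP[h5 _] _ _ _] := Hlr i./2.+1 kp.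
      exfalso; apply: (Ez (z i./2.+1)); first by rewrite QE subr_gt0 Hz // ltnW.
      apply: (@noroot_itv _ _ (rho i) (rho i.+1)); rewrite ?h1 ?h2 //.
      - have ri : rho i = r i./2 by rewrite {1}ie rho_r.
        have ri1 : rho i.+1 = l i./2.+1 by rewrite {1}ie -doubleS rho_l.
        by rewrite ri ri1 h4 h5.
      - by move=> y; apply: (gap_noroot mono ex ip').
    * have [kp e] := half_even ip' o.
      have ie : i = (i./2).*2 by have := odd_double_half i; rewrite o; lia.
      exists i./2 => //.
      have ri : rho i = l i./2 by rewrite {1}ie rho_l.
      have ri1 : rho i.+1 = r i./2 by rewrite {1}ie rho_r.
      by rewrite -ri -ri1 h1 h2.
- move=> [j jp /andP[h1 h2]].
  have [/andP[_ h3] /andP[h4 _] _ _] := Hlr j jp.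
  have hx : Q.[x j] < 0 by rewrite QE subr_lt0 Hx.
  apply: (nn_neg hx).
  have jp' : (j.*2.+1 < p.*2)%N by move: jp; lia.
  apply: (@noroot_itv _ _ (l j) (r j)); rewrite ?h1 ?h2 ?h3 ?h4 //.
  move=> y; rewrite -rho_l -rho_r; exact: (gap_noroot mono ex jp').
Qed.

End Bands.



Section Topo.
Variables (R : realType) (p : nat) (hp : (0 < p)%N).

Lemma perseqE (a : 'rV[R]_p) m : perseq a m = a 0 (Ordinal (ltn_pmod m hp)).
Proof.
rewrite /perseq insubT ?ltn_pmod // => H /=; congr (a _ _); exact: val_inj.
Qed.

Lemma mono_entry (b : 'rV[R]_p) z n (i j : 'I_2) :
  monodromy_upto b (zero_b R p) z n.+1 i j =
  (perseq b n.+1)^-1 * (if i == 0 :> nat then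
      z * monodromy_upto b (zero_b R p) z n ord0 j - monodromy_upto b (zero_b R p) z n ord_max j
    else perseq b n.+1 ^+ 2 * monodromy_upto b (zero_b R p) z n ord0 j).
Proof.
rewrite /= !mxE !big_ord_recl big_ord0 addr0 !mxE /= perseq0 subr0.
have -> : lift ord0 ord0 = ord_max :> 'I_2 by apply: val_inj.
by case: i => [[|[|i]] Hi] //=; ring.
Qed.

Definition ctsat (a : 'rV[R]_p) (f : 'rV[R]_p -> R) := f x @[x --> a] --> f a.

Lemma ctsat_eq a f g : (forall b, f b = g b) -> ctsat a g -> ctsat a f.
Proof. by move=> e; rewrite /ctsat (funext e). Qed.

Lemma ctM a f g : ctsat a f -> ctsat a g -> ctsat a (fun b => f b * g b).
Proof. move=> hf hg; exact: (cvgM hf hg). Qed.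
Lemma ctD a f g : ctsat a f -> ctsat a g -> ctsat a (fun b => f b + g b).
Proof. move=> hf hg; exact: (cvgD hf hg). Qed.
Lemma ctB a f g : ctsat a f -> ctsat a g -> ctsat a (fun b => f b - g b).
Proof. move=> hf hg; exact: (cvgB hf hg). Qed.
Lemma ctV a f : f a != 0 -> ctsat a f -> ctsat a (fun b => (f b)^-1).
Proof. move=> h hf; exact: (cvgV h hf). Qed.
Lemma ctC a (c : R) : ctsat a (fun _ => c).
Proof. by apply: cvg_cst; first [exact: nbhs_filter | exact: mx_nbhs_filter | typeclasses eauto]. Qed.

Lemma ct_perseq a m : ctsat a (fun b => perseq b m).
Proof.
apply: (ctsat_eq (fun b => perseqE b m)); rewrite /ctsat.
exact: coord_continuous.
Qed.

Lemma ct_mono a z : (forall m, 0 < perseq a m) ->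
  forall n i j, ctsat a (fun b => monodromy_upto b (zero_b R p) z n i j).
Proof.
move=> apos; elim => [|n IH] i j.
  rewrite /ctsat /=.
  apply: cvg_cst; first [exact: nbhs_filter | exact: mx_nbhs_filter | typeclasses eauto].
apply: (ctsat_eq (fun b => mono_entry b z n i j)).
have cn0 : perseq a n.+1 != 0 by rewrite gt_eqF.
apply: ctM; first by apply: ctV => //; exact: ct_perseq.
case: (i == 0 :> nat).
  apply: ctB; last exact: IH.
  by apply: ctM; [exact: ctC | exact: IH].
apply: ctM; last exact: IH.
by apply: ctM; exact: ct_perseq.
Qed.

Lemma ct_disc a z : (forall m, 0 < perseq a m) ->
  ctsat a (fun b => discriminant b (zero_b R p) z).
Proof.
move=> apos.
apply: (@ctsat_eq _ _ (fun b => monodromy_upto b (zero_b R p) z p ord0 ord0 +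
   monodromy_upto b (zero_b R p) z p ord_max ord_max)).
  move=> b; rewrite /discriminant /monodromy /mxtrace !big_ord_recl big_ord0 addr0.
  by congr (_ + _); congr (monodromy_upto _ _ _ _ _ _); apply: val_inj.
by apply: ctD; exact: ct_mono.
Qed.


Definition goodU (a : 'rV[R]_p) := exists z x : nat -> R,
  [/\ forall k, (k < p)%N -> z k < x k < z k.+1,
      forall k, (k <= p)%N -> 4 < (discriminant a (zero_b R p) (z k)) ^+ 2
    & forall k, (k < p)%N -> (discriminant a (zero_b R p) (x k)) ^+ 2 < 4].

Definition Ugood := [set a : 'rV[R]_p | pos_orthant a /\ goodU a].

Lemma goodU_P a : pos_orthant a ->
  goodU a <-> goodP (X00 (perseq a) p + X11 (perseq a) p) p.
Proof.
move=> apos; have cpos := fun m => perseq_pos m hp apos.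
split => -[z [x [h1 h2 h3]]]; exists z, x; split => // k kp.
- by rewrite -discE //; apply: h2.
- by rewrite -discE //; apply: h3.
- by rewrite discE //; apply: h2.
- by rewrite discE //; apply: h3.
Qed.

Lemma ct_disc2 a z : (forall m, 0 < perseq a m) ->
  ctsat a (fun b => discriminant b (zero_b R p) z ^+ 2).
Proof.
move=> apos; apply: (@ctsat_eq _ _ (fun b => discriminant b (zero_b R p) z *
   discriminant b (zero_b R p) z)); first by move=> b; rewrite expr2.
by apply: ctM; exact: ct_disc.
Qed.

Lemma Ugood_open : open Ugood.
Proof.
rewrite openE => a [apos [z [x [hzx hz hx]]]].
have cpos := fun m => perseq_pos m hp apos.
rewrite /interior.
have H1 : nbhs a (fun b : 'rV[R]_p => forall i : 'I_p, 0 < b 0 i).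
  apply: (@filter_forall _ _ (fun i (b : 'rV[R]_p) => 0 < b 0 i) (nbhs a)).
  move=> i.
  have h := cvgr_gt _ (@coord_continuous R 1 p 0 i a) 0 (apos i).
  exact: h.
have H2 : nbhs a (fun b : 'rV[R]_p => forall k : 'I_p.+1,
    4 < discriminant b (zero_b R p) (z k) ^+ 2).
  apply: (@filter_forall _ _ (fun (k : 'I_p.+1) (b : 'rV[R]_p) =>
    4 < discriminant b (zero_b R p) (z k) ^+ 2) (nbhs a)).
  move=> k.
  have h := cvgr_gt _ (@ct_disc2 a (z k) cpos) 4 (hz k (ltn_ord k)).
  exact: h.
have H3 : nbhs a (fun b : 'rV[R]_p => forall k : 'I_p,
    discriminant b (zero_b R p) (x k) ^+ 2 < 4).
  apply: (@filter_forall _ _ (fun (k : 'I_p) (b : 'rV[R]_p) =>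
    discriminant b (zero_b R p) (x k) ^+ 2 < 4) (nbhs a)).
  move=> k.
  have h := cvgr_lt _ (@ct_disc2 a (x k) cpos) 4 (hx k (ltn_ord k)).
  exact: h.
apply: (filterS3 _ _ H1 H2 H3) => b h1 h2 h3; split; first exact: h1.
exists z, x; split => // k kp.
- by have := h2 (Ordinal (kp : (k < p.+1)%N)).
- by have := h3 (Ordinal kp).
Qed.

Lemma avoid (s : seq R) (f : nat -> R) : injective f -> exists k, f k \notin s.
Proof.
move=> finj; case: (pselect (exists k, f k \notin s)) => // H; exfalso.
have Hin : forall k, f k \in s.
  by move=> k; apply/negPn/negP => h; apply: H; exists k.
have Hsub : {subset map f (iota 0 (size s).+1) <= s}.
  by move=> y /mapP [k _ ->].
have Hu : uniq (map f (iota 0 (size s).+1)) by rewrite map_inj_uniq // iota_uniq.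
by have := uniq_leq_size Hu Hsub; rewrite size_map size_iota ltnn.
Qed.

Lemma Ugood_dense : @pos_orthant R p `<=` closure Ugood.
Proof.
move=> a apos B /nbhs_ballP [e e0 hB].
set c := perseq a.
have cpos : forall m, 0 < c m := fun m => perseq_pos m hp apos.
set n := p.-1.
have pn : p = n.+1 by rewrite prednK.
have [bad Hbad] := good_Dt n cpos.
set i0 : 'I_p := Ordinal hp.
set a0 := a 0 i0.
have finj : injective (fun k : nat => a0 + e / k.+2%:R).
  move=> k1 k2 /addrI /(mulfI (lt0r_neq0 e0)) /invr_inj /eqP.
  by rewrite eqr_nat => /eqP [].
have [k kbad] := avoid bad finj.
set t := a0 + e / k.+2%:R in kbad.
have ek : 0 < e / k.+2%:R by rewrite divr_gt0 // ltr0n.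
have ek2 : e / k.+2%:R < e.
  rewrite ltr_pdivrMr ?ltr0n // ltr_pMr // ltr1n //.
have tpos : 0 < t by rewrite addr_gt0 // apos.
pose b : 'rV[R]_p := \row_j (if j == i0 then t else a 0 j).
have bpos : pos_orthant b.
  by move=> j; rewrite mxE; case: (j == i0) => //; exact: apos.
exists b; split; last first.
  apply: hB; split => // i j; rewrite (ord1 i) mxE.
  case: (j == i0) /eqP => [->|_]; last exact: ballxx.
  rewrite -ball_normE /ball_ /= /t -/a0 opprD addrA subrr add0r normrN.
  by rewrite gtr0_norm.
split => //; apply/goodU_P => //.
have Hp : forall c0 : nat -> R, X00 c0 p + X11 c0 p = Dt c0 n (c0 p).
  by move=> c0; rewrite pn.
rewrite Hp.
have ebt : perseq b p = t.
  rewrite perseqE mxE; case: eqP => // h; exfalso; apply: h; apply: val_inj => /=.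
  by rewrite modnn.
have ebc : PM (perseq b) n = PM c n.
  apply: PM_ext => i /andP[i0' ii].
  have ip : (i < p)%N by rewrite pn ltnS.
  rewrite /c !perseqE mxE; case: eqP => [h|_].
    exfalso; move: h => /(congr1 val) /= h'; move: i0'.
    by rewrite -(modn_small ip) h'.
  by congr (a _ _); apply: val_inj.
rewrite ebt /Dt /X00 /X01 /X10 ebc -/(X00 c n) -/(X01 c n) -/(X10 c n).
by rewrite pn; apply: Hbad.
Qed.

End Topo.

Theorem lemma2p1_main (R : realType) (p : nat) (hp : (0 < p)%N) :
  exists U : set 'rV[R]_p,
    [/\ open U,
        U `<=` @pos_orthant R p,
        @pos_orthant R p `<=` closure U
      & forall a, U a -> all_gaps_open a (@zero_b R p)].
Proof.
exists (@Ugood R p); split.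
- exact: Ugood_open.
- by move=> a [].
- exact: Ugood_dense.
move=> a [apos hg]; move/(goodU_P hp apos): hg => hg.
have cpos := fun m => perseq_pos m hp apos.
have [s00 _ _ _ s11] := PM_size p cpos.
have sD : (size (X00 (perseq a) p + X11 (perseq a) p)%R <= p.+1)%N.
  by apply: leq_trans (size_polyD _ _) _; rewrite geq_max s00 leqnn s11.
have [l [r [h1 h2 h3]]] := bands hp sD hg.
exists l, r; split => // E; rewrite /interior_spec /= discE //; exact: h3.
Qed.

Theorem lemma2p1 (R : realType) (p : nat) (hp : (0 < p)%N) :
  exists U : set 'rV[R]_p,
    [/\ open U,
        U `<=` @pos_orthant R p,
        @pos_orthant R p `<=` closure U
      & forall a, U a -> all_gaps_open a (@zero_b R p)].
Proof. exact: lemma2p1_main. Qed.
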